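(* Let $\{S_1,\dots,S_N\}$ be an IFS of contracting similitudes of $\mathbb R^d$, ordered by $1\prec2\prec\cdots\prec N$. Then it is a linear IFS if and only if $S_{i+1}(\mathrm{Fix}(S_1))=S_i(\mathrm{Fix}(S_N))$ for all $i=1,\dots,N-1$, where $\mathrm{Fix}(S)$ denotes the unique fixed point of $S$.
   Context: Let $K$ be the invariant set of the IFS, i.e. the unique nonempty compact set with $K=\bigcup_{j=1}^N S_j(K)$. For a word $i_1\dots i_m\in\{1,\dots,N\}^m$ write $S_{i_1\dots i_m}=S_{i_1}\circ\cdots\circ S_{i_m}$. Order the words of length $m$ lexicographically (with $1\prec\cdots\prec N$); two words of length $m$ are adjacent if they are consecutive in this order. The ordered IFS is a linear IFS if $S_\omega(K)\cap S_\gamma(K)\neq\emptyset$ for every $m\ge1$ and every pair of adjacent words $\omega,\gamma$ of length $m$. *)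

(* Defs.v *)
From mathcomp Require Import ssreflect ssrfun ssrbool eqtype ssrnat seq fintype bigop.
From Stdlib Require Import Reals.
Set Implicit Arguments. Unset Strict Implicit. Unset Printing Implicit Defensive.

Definition Rd (d : nat) := 'I_d -> R.

Definition dist (d : nat) (x y : Rd d) : R :=
  sqrt (\big[Rplus/0%R]_(i < d) ((x i - y i) * (x i - y i))%R).

Definition contracting_similitude (d : nat) (S : Rd d -> Rd d) : Prop :=
  exists r : R, (0 < r < 1)%R /\ forall x y, dist (S x) (S y) = (r * dist x y)%R.

Definition compact (d : nat) (K : Rd d -> Prop) : Prop :=
  forall u : nat -> Rd d, (forall n, K (u n)) ->
    exists phi : nat -> nat, (forall n, (phi n < phi n.+1)%N) /\
    exists l, K l /\
      forall eps : R, (0 < eps)%R -> exists n0 : nat,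
        forall n, (n0 <= n)%N -> (dist (u (phi n)) l < eps)%R.

Definition invariant_set (d N : nat) (S : nat -> Rd d -> Rd d) (K : Rd d -> Prop) : Prop :=
  (exists x, K x) /\ compact K /\
  forall x, K x <-> exists j, (j < N)%N /\ exists y, K y /\ x = S j y.

(* Words over the alphabet {0,...,N-1} (0-based; letter i stands for i+1
   of the paper) of length m. *)
Definition word (N m : nat) (w : seq nat) : Prop :=
  size w = m /\ all (fun i => (i < N)%N) w.

Definition Sw (d : nat) (S : nat -> Rd d -> Rd d) (w : seq nat) : Rd d -> Rd d :=
  foldr (fun i (f : Rd d -> Rd d) => fun x => S i (f x)) (fun x : Rd d => x) w.

Fixpoint lexlt (w g : seq nat) : bool :=
  match w, g with
  | a :: w', b :: g' => (a < b)%N || ((a == b) && lexlt w' g')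
  | _, _ => false
  end.

Definition adjacent (N m : nat) (w g : seq nat) : Prop :=
  word N m w /\ word N m g /\ lexlt w g /\
  ~ (exists h, word N m h /\ lexlt w h /\ lexlt h g).

Definition linear_IFS (d N : nat) (S : nat -> Rd d -> Rd d) (K : Rd d -> Prop) : Prop :=
  forall m : nat, (1 <= m)%N -> forall w g : seq nat, adjacent N m w g ->
    exists x : Rd d, (exists y, K y /\ x = Sw S w y) /\ (exists z, K z /\ x = Sw S g z).

(* Main.v *)
Require Import Defs.
From Stdlib Require Import Lra IndefiniteDescription FunctionalExtensionality Classical.
From HB Require Import structures.
From mathcomp Require Import ssreflect ssrfun ssrbool eqtype ssrnat seq fintype bigop.
From Stdlib Require Import Reals.

Set Implicit Arguments.
Local Open Scope R_scope.
Local Notation dist := Defs.dist.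

HB.instance Definition _ := Monoid.isComLaw.Build R 0 Rplus (fun a b c => esym (Rplus_assoc a b c)) Rplus_comm Rplus_0_l.

Lemma dist_ge0 d (x y : Rd d) : 0 <= dist x y.
Proof. exact: sqrt_pos. Qed.

Lemma sum_sq_ge0 d (F : 'I_d -> R) : 0 <= \big[Rplus/0]_(i < d) (F i * F i).
Proof.
apply: (big_ind (fun a => 0 <= a)); [lra | intros; lra | intros; nra].
Qed.

Lemma coord_le d (x y : Rd d) (c : 'I_d) : Rabs (x c - y c) <= dist x y.
Proof.
rewrite /dist -sqrt_Rsqr_abs /Rsqr; apply: sqrt_le_1_alt.
rewrite (bigD1 c) //=.
rewrite -[X in X <= _]Rplus_0_r; apply: Rplus_le_compat_l.
apply: (big_ind (fun a => 0 <= a)); [lra | intros; lra | move=> i _; exact: Rle_0_sqr].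
Qed.

Lemma dist_sym d (x y : Rd d) : dist x y = dist y x.
Proof. rewrite /dist; f_equal; apply: eq_bigr => i _; ring. Qed.

Lemma dist_le_L1 d (x y : Rd d) :
  dist x y <= \big[Rplus/0]_(i < d) Rabs (x i - y i).
Proof.
have H : (\big[Rplus/0]_(i < d) ((x i - y i) * (x i - y i)) <=
          (\big[Rplus/0]_(i < d) Rabs (x i - y i))^2 /\ 0 <= \big[Rplus/0]_(i < d) Rabs (x i - y i)).
  apply: (big_ind2 (fun a b => a <= b^2 /\ 0 <= b)).
  - lra.
  - move=> a1 b1 a2 b2 [h1 h1'] [h2 h2']; split; nra.
  - move=> i _; split; [| exact: Rabs_pos].
    rewrite pow2_abs /=; nra.
case: H => H1 H2.
rewrite /dist -(sqrt_pow2 (\big[Rplus/0]_(i < d) Rabs (x i - y i))) //.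
exact: sqrt_le_1_alt.
Qed.

Lemma eq_of_close d (a b : Rd d) :
  (forall eps, 0 < eps -> exists x, dist x a < eps /\ dist x b < eps) -> a = b.
Proof.
move=> H; apply: functional_extensionality => c.
apply: Rminus_diag_uniq.
case: (Req_dec (a c - b c) 0) => // hne; exfalso.
have hp : 0 < Rabs (a c - b c) / 2 by have := Rabs_pos_lt _ hne; lra.
case: (H _ hp) => x [h1 h2].
have := coord_le x a c; have := coord_le x b c.
have := Rabs_triang (x c - b c) (a c - x c).
rewrite (Rabs_minus_sym (a c)).
have -> : x c - b c + (a c - x c) = a c - b c by ring.
lra.
Qed.

Lemma small_pow r B eps : 0 < r < 1 -> 0 <= B -> 0 < eps ->
  exists n0 : nat, forall n : nat, leq n0 n -> r ^ n * B < eps.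
Proof.
move=> hr hB he.
have hr' : Rabs r < 1 by rewrite Rabs_right; lra.
have he' : 0 < eps / (B + 1) by apply: Rdiv_lt_0_compat; lra.
case: (pow_lt_1_zero r hr' _ he') => n0 Hn; exists n0 => n hn.
have := Hn n (ssrnat.leP hn).
rewrite Rabs_right; last by apply: Rle_ge; apply: pow_le; lra.
move=> h.
have h0 : 0 <= r ^ n by apply: pow_le; lra.
have : r ^ n * (B + 1) < eps.
  by have := Rmult_lt_compat_r (B+1) _ _ ltac:(lra) h; rewrite /Rdiv Rmult_assoc Rinv_l; lra.
nra.
Qed.

Lemma phi_ge (phi : nat -> nat) : (forall n, leq (phi n).+1 (phi n.+1)) -> forall n, leq n (phi n).
Proof.
move=> H; elim=> [//|n IH]; exact: leq_ltn_trans IH (H n).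
Qed.

Lemma Sw_cons d (S : nat -> Rd d -> Rd d) a w x : Sw S (a :: w) x = S a (Sw S w x).
Proof. by []. Qed.

Lemma Sw_nseq_fix d (S : nat -> Rd d -> Rd d) j p k : S j p = p -> Sw S (nseq k j) p = p.
Proof. move=> h; elim: k => [//|k IH]; by rewrite /= IH. Qed.

Lemma Sw_nseq_dist d (S : nat -> Rd d -> Rd d) j p r y k :
  (forall x y, dist (S j x) (S j y) = r * dist x y) -> S j p = p ->
  dist (Sw S (nseq k j) y) p = r ^ k * dist y p.
Proof.
move=> hr hp; elim: k => [|k IH] /=; first ring.
have := hr (Sw S (nseq k j) y) p; rewrite hp => ->; rewrite IH; ring.
Qed.

Lemma nseq_in_K d N (S : nat -> Rd d -> Rd d) K j y k :
  invariant_set N S K -> leq j.+1 N -> K y -> K (Sw S (nseq k j) y).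
Proof.
move=> [_ [_ hK]] hj hy; elim: k => [//|k IH] /=.
apply/hK; exists j; split => //; by exists (Sw S (nseq k j) y).
Qed.

Lemma fix_in_K d N (S : nat -> Rd d -> Rd d) K j p :
  invariant_set N S K -> leq j.+1 N -> contracting_similitude (S j) -> S j p = p -> K p.
Proof.
move=> hK hj [r [hr hd]] hp.
have hK' := hK; case: hK' => [[y0 hy0] [hc _]].
pose u n := Sw S (nseq n j) y0.
case: (hc u (fun n => @nseq_in_K d N S K j y0 n hK hj hy0)) => phi [hphi [l [hl hconv]]].
suff -> : p = l by [].
apply: eq_of_close => eps he.
case: (hconv eps he) => n0 Hn0.
case: (small_pow hr (dist_ge0 y0 p) he) => n1 Hn1.
exists (u (phi (maxn n0 n1))); split; last first.
  apply: Hn0; exact: leq_maxl.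
rewrite /u (@Sw_nseq_dist d S j p r y0 _ hd hp); apply: Hn1.
exact: leq_trans (leq_maxr n0 n1) (@phi_ge phi hphi _).
Qed.

Lemma bounded_K d (K : Rd d -> Prop) (p : Rd d) :
  Defs.compact K -> exists B, 0 <= B /\ forall y, K y -> dist y p <= B.
Proof.
move=> hc; apply: NNPP => H.
have Hn : forall n : nat, exists y, K y /\ INR n < dist y p.
  move=> n; apply: NNPP => Hn; apply: H; exists (INR n); split; first exact: pos_INR.
  move=> y hy; apply: Rnot_lt_le => hlt; apply: Hn; by exists y.
pose u n := proj1_sig (constructive_indefinite_description _ (Hn n)).
have hu : forall n, K (u n) /\ INR n < dist (u n) p.
  move=> n; exact: proj2_sig (constructive_indefinite_description _ (Hn n)).
case: (hc u (fun n => proj1 (hu n))) => phi [hphi [l [hl hconv]]].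
case: (hconv 1 Rlt_0_1) => n0 Hn0.
pose C := \big[Rplus/0]_(i < d) (1 + Rabs (l i - p i)).
case: (INR_unbounded C) => n2 hn2.
pose n := maxn n0 n2.
have h1 : dist (u (phi n)) p <= C.
  apply: Rle_trans (dist_le_L1 _ _) _.
  apply: (big_ind2 (fun a b => a <= b)); [lra | move=> *; lra |].
  move=> i _.
  have := coord_le (u (phi n)) l i.
  have := Hn0 n (leq_maxl _ _).
  have := Rabs_triang (u (phi n) i - l i) (l i - p i).
  have -> : u (phi n) i - l i + (l i - p i) = u (phi n) i - p i by ring.
  lra.
have h2 : INR n2 <= INR (phi n).
  apply: le_INR; apply/ssrnat.leP.
  exact: leq_trans (leq_maxr n0 n2) (@phi_ge phi hphi _).
have := proj2 (hu (phi n)). lra.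
Qed.

Lemma ltn_leq_pred c N : leq c.+1 N -> leq c N.-1.
Proof. by case: N. Qed.

Lemma lexlt_max N k h : all (fun i => leq i.+1 N) h -> size h = k -> ~~ lexlt (nseq k N.-1) h.
Proof.
elim: h k => [|c h IH] [|k] //= /andP [hc hh] [hs].
rewrite negb_or; apply/andP; split.
  by rewrite -leqNgt ltn_leq_pred.
rewrite negb_and (IH k hh hs) orbT //.
Qed.

Lemma lexlt_min k h : size h = k -> ~~ lexlt h (nseq k O).
Proof.
elim: h k => [|c h IH] [|k] //= [hs].
by rewrite /= negb_and (IH k hs) orbT.
Qed.

Lemma lt_max N k h : all (fun i => leq i.+1 N) h -> size h = k -> h <> nseq k N.-1 ->
  lexlt h (nseq k N.-1).
Proof.
elim: h k => [|c h IH] [|k] //= /andP [hc hh] [hs] hne.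
have hcM : leq c N.-1 by apply: ltn_leq_pred.
case: (ltnP c N.-1) => [//|hge] /=.
have hcE : c = N.-1 by apply/eqP; rewrite eqn_leq hcM hge.
rewrite hcE eqxx /=; apply: IH => // e; apply: hne; by rewrite hcE e.
Qed.

Lemma gt_min k h : size h = k -> h <> nseq k O -> lexlt (nseq k O) h.
Proof.
elim: h k => [|c h IH] [|k] //= [hs] hne.
case: c hne => [|c] hne /=; last by [].
apply: IH => // e; apply: hne; by rewrite e.
Qed.

Lemma key_lemma d N (S : nat -> Rd d -> Rd d) (p1 pN : Rd d) :
  leq 1 N -> S O p1 = p1 -> S N.-1 pN = pN ->
  (forall i : nat, leq i.+2 N -> S i.+1 p1 = S i pN) ->
  forall w g m, word N m w -> word N m g -> lexlt w g ->
  (forall h, word N m h -> lexlt w h -> lexlt h g -> False) ->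
  Sw S w pN = Sw S g p1.
Proof.
move=> hN hp1 hpN hyp.
elim=> [|a w IH] [|b g] m //= [hsw hw] [hsg hg].
case: m hsw hsg => [//|k] [hsw] [hsg].
move: hw hg => /andP [ha hw] /andP [hb hg].
case/orP => [hab | /andP [/eqP hab hwg]] hno.
- have hw' : w = nseq k N.-1.
    apply: NNPP => hne; apply: (hno (a :: nseq k N.-1)).
    + split; first by rewrite /= size_nseq.
      rewrite /= ha all_nseq /=; apply/orP; right; by rewrite prednK.
    + by rewrite /= eqxx lt_max // orbT.
    + by rewrite /= hab.
  have hg' : g = nseq k O.
    apply: NNPP => hne; apply: (hno (b :: nseq k O)).
    + split; first by rewrite /= size_nseq.
      by rewrite /= hb all_nseq /= (leq_ltn_trans _ hN) ?orbT.
    + by rewrite /= hab.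
    + by rewrite /= eqxx gt_min // orbT.
  have hb' : b = a.+1.
    apply/eqP; rewrite eqn_leq hab andbT; apply: NNPP => hne.
    have hlt : leq a.+2 b by rewrite ltnNge; apply/negP.
    apply: (hno (a.+1 :: w)).
    + split; first by rewrite /= hsw.
      apply/andP; split; [exact: ltn_trans hlt hb | exact: hw].
    + by rewrite /= ltnSn.
    + by rewrite /= hlt.
  rewrite hw' hg' hb' Sw_nseq_fix // Sw_nseq_fix //.
  by rewrite hyp // -hb'.
- rewrite hab (IH g k) //.
  move=> h hh h1 h2; apply: (hno (b :: h)).
  + case: hh => hs hh; split; first by rewrite /= hs.
    by rewrite /= hb hh.
  + by rewrite /= hab eqxx ltnn h1.
  + by rewrite /= eqxx ltnn h2.
Qed.

Lemma adj_words N i k : leq 1 N -> leq i.+2 N ->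
  adjacent N k.+1 (i :: nseq k N.-1) (i.+1 :: nseq k O).
Proof.
move=> hN hi.
split; [|split; [|split]].
- split; first by rewrite /= size_nseq.
  rewrite /= (ltn_trans (ltnSn i) hi) all_nseq /=; apply/orP; right; by rewrite prednK.
- split; first by rewrite /= size_nseq.
  by rewrite /= hi all_nseq /= hN orbT.
- by rewrite /= ltnSn.
- move=> [[|c h] [[hs hh] [h1 h2]]] //.
  move: hs => /= [hs]; move: hh => /= /andP [hc hh].
  move: h1 => /= /orP [h1 | /andP [_ h1]]; last by move: h1; apply/negP; apply: lexlt_max.
  move: h2 => /= /orP [h2 | /andP [_ h2]]; last by move: h2; apply/negP; apply: lexlt_min.
  by move: (leq_trans h1 h2); rewrite ltnn.
Qed.

Local Close Scope R_scope.
Unset Implicit Arguments.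

Theorem corollary4p2 (d N : nat) (S : nat -> Rd d -> Rd d) (K : Rd d -> Prop)
  (hN : (0 < N)%N)
  (hS : forall i, (i < N)%N -> contracting_similitude (S i))
  (hK : invariant_set N S K)
  (p1 pN : Rd d) (hp1 : S 0%N p1 = p1) (hpN : S N.-1 pN = pN) :
  linear_IFS N S K <->
  (forall i : nat, (i.+1 < N)%N -> S i.+1 p1 = S i pN).
Proof.
have hNm : (N.-1 < N)%N by rewrite prednK.
have hK1 : K p1 := @fix_in_K d N S K O p1 hK hN (hS _ hN) hp1.
have hKN : K pN := @fix_in_K d N S K N.-1 pN hK hNm (hS _ hNm) hpN.
split.
- move=> hlin i hi.
  have hi' : (i < N)%N := ltn_trans (ltnSn i) hi.
  case: (hK) => _ [hc _].
  case: (bounded_K p1 hc) => B0 [hB0 HB0].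
  case: (bounded_K pN hc) => B1 [hB1 HB1].
  case: (hS _ hN) => r0 [hr0 hd0].
  case: (hS _ hNm) => rM [hrM hdM].
  case: (hS _ hi) => ri1 [hri1 hdi1].
  case: (hS _ hi') => ri [hri hdi].
  apply: eq_of_close => eps he.
  case: (small_pow hr0 hB0 he) => n0 Hn0.
  case: (small_pow hrM hB1 he) => n1 Hn1.
  pose k := maxn n0 n1.
  case: (hlin k.+1 isT _ _ (adj_words N i k hN hi)) => x [[y [hy ex]] [z [hz ez]]].
  exists x; split.
  + rewrite ez /= hdi1 (@Sw_nseq_dist d S O p1 r0 z _ hd0 hp1).
    have := HB0 z hz; have := Hn0 k (leq_maxl _ _).
    have hp : (0 <= r0 ^ k)%R by apply: pow_le; lra.
    move=> h1 h2.
    have h3 := dist_ge0 z p1.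
    have h4 : (r0 ^ k * dist z p1 <= r0 ^ k * B0)%R by apply: Rmult_le_compat_l.
    have h5 : (0 <= r0 ^ k * dist z p1)%R by apply: Rmult_le_pos.
    case: hri1 => ? ?; nra.
  + rewrite ex /= hdi (@Sw_nseq_dist d S N.-1 pN rM y _ hdM hpN).
    have := HB1 y hy; have := Hn1 k (leq_maxr _ _).
    have hp : (0 <= rM ^ k)%R by apply: pow_le; lra.
    move=> h1 h2.
    have h3 := dist_ge0 y pN.
    have h4 : (rM ^ k * dist y pN <= rM ^ k * B1)%R by apply: Rmult_le_compat_l.
    have h5 : (0 <= rM ^ k * dist y pN)%R by apply: Rmult_le_pos.
    case: hri => ? ?; nra.
- move=> hyp m hm w g [hw [hg [hwg hno]]].
  exists (Sw S w pN); split; first by exists pN.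
  exists p1; split => //.
  apply: (@key_lemma d N S p1 pN hN hp1 hpN hyp _ _ _ hw hg hwg).
  move=> h hh h1 h2; apply: hno; by exists h.
Qed.
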